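(* Let $X$ be a compact metric space and $f:X\dashrightarrow X$ a continuous open-dense defined map which is good with respect to iterates. For every positive strong submeasure $\hat\mu$ on $\Gamma_{f,\infty}$, $$f_*(\pi_1)_*(\hat\mu)\ge(\pi_1)_*(\sigma_f)_*(\hat\mu).$$
   Context: Positive strong submeasures on a compact metric space $W$: sub-linear, bounded, non-decreasing maps $C^0(W)\to\mathbb{R}$; $\mu\le\nu$ means pointwise inequality on $C^0$. For a continuous map $g:W\to W'$ between compact metric spaces, $g_*(\mu)(\varphi)=\mu(\varphi\circ g)$. A continuous open-dense defined map $f:X\dashrightarrow X$ is a continuous map $f:\mathrm{OpenDom}(f)\to X$ with $\mathrm{OpenDom}(f)$ open dense, $I(f)=X\setminus\mathrm{OpenDom}(f)$; its pushforward is $f_*(\mu)(\varphi)=\inf\{\mu(\psi):\psi\in C^0(X),\psi\ge E(\varphi\circ f)\}$, where $E(\varphi\circ f)=\varphi\circ f$ on $\mathrm{OpenDom}(f)$ and $E(\varphi\circ f)(x)=\limsup_{y\in\mathrm{OpenDom}(f),y\to x}\varphi(f(y))$ otherwise. $\Omega_{f,\infty}=\{x\in\mathrm{OpenDom}(f):f^n(x)\notin I(f)\ \forall n\}$; $f$ is good with respect to iterates if $\Omega_{f,\infty}$ is dense and $X\setminus\Omega_{f,\infty}$ is nowhere dense. $\Gamma_{f,\infty}$ is the closure in $X^{\mathbb{N}}$ (product topology) of $\{(x,f(x),f^2(x),\ldots):x\in\Omega_{f,\infty}\}$, $\sigma_f$ is the shift map on it and $\pi_1:\Gamma_{f,\infty}\to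 X$ the first coordinate projection. *)

(* Defs.v *)
From Stdlib Require Import Reals List Classical ClassicalEpsilon ClassicalDescription.
Open Scope R_scope.

Definition Rsup (S : R -> Prop) : R := epsilon (inhabits 0) (is_lub S).
Definition Rinf (S : R -> Prop) : R := - Rsup (fun r => S (- r)).

Section Metric.
Context {X : Type} (d : X -> X -> R).

Definition is_metric : Prop :=
  (forall x y, 0 <= d x y) /\ (forall x y, d x y = 0 <-> x = y) /\
  (forall x y, d x y = d y x) /\ (forall x y z, d x z <= d x y + d y z).

Definition m_open (U : X -> Prop) : Prop :=
  forall x, U x -> exists r, 0 < r /\ forall y, d x y < r -> U y.

Definition compact_metric : Prop :=
  forall (I : Type) (U : I -> X -> Prop),
    (forall i, m_open (U i)) -> (forall x, exists i, U i x) ->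
    exists l : list I, forall x, exists i, In i l /\ U i x.

Definition m_closure (S : X -> Prop) (x : X) : Prop :=
  forall eps, 0 < eps -> exists y, S y /\ d x y < eps.

Definition m_dense (S : X -> Prop) : Prop := forall x, m_closure S x.

Definition m_nowhere_dense (S : X -> Prop) : Prop :=
  forall U, m_open U -> (forall x, U x -> m_closure S x) -> forall x, ~ U x.

Definition contX (phi : X -> R) : Prop :=
  forall x eps, 0 < eps -> exists delta, 0 < delta /\
    forall y, d x y < delta -> Rabs (phi y - phi x) < eps.

Definition cont_on (Dom : X -> Prop) (f : X -> X) : Prop :=
  forall x, Dom x -> forall eps, 0 < eps -> exists delta, 0 < delta /\
    forall y, Dom y -> d x y < delta -> d (f x) (f y) < eps.

(* continuous open-dense defined map f : X --> X, with OpenDom(f) = Dom;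
   the values of f outside Dom are irrelevant. *)
Definition open_dense_map (Dom : X -> Prop) (f : X -> X) : Prop :=
  m_open Dom /\ m_dense Dom /\ cont_on Dom f.

Definition Omega_inf (Dom : X -> Prop) (f : X -> X) (x : X) : Prop :=
  Dom x /\ forall n : nat, Dom (Nat.iter n f x).

Definition good_wrt_iterates (Dom : X -> Prop) (f : X -> X) : Prop :=
  m_dense (Omega_inf Dom f) /\ m_nowhere_dense (fun x => ~ Omega_inf Dom f x).

(* Gamma_{f,infty}: m_closure in X^N (product topology) of the orbits of
   points of Omega_{f,infty}.  Basic neighbourhoods of z in the product
   topology are {w | d (z i) (w i) < eps for i <= N}. *)
Definition Gamma_inf (Dom : X -> Prop) (f : X -> X) (z : nat -> X) : Prop :=
  forall (N : nat) eps, 0 < eps -> exists x, Omega_inf Dom f x /\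
    forall i, (i <= N)%nat -> d (z i) (Nat.iter i f x) < eps.

Definition contGamma (Dom : X -> Prop) (f : X -> X) (Phi : (nat -> X) -> R) : Prop :=
  forall z, Gamma_inf Dom f z -> forall eps, 0 < eps ->
    exists (N : nat) delta, 0 < delta /\
      forall w, Gamma_inf Dom f w ->
        (forall i, (i <= N)%nat -> d (z i) (w i) < delta) ->
        Rabs (Phi w - Phi z) < eps.

Definition limsup_Dom (Dom : X -> Prop) (g : X -> R) (x : X) : R :=
  Rinf (fun s => exists delta, 0 < delta /\
          s = Rsup (fun v => exists y, Dom y /\ d x y < delta /\ v = g y)).

Definition Ext (Dom : X -> Prop) (f : X -> X) (phi : X -> R) (x : X) : R :=
  if excluded_middle_informative (Dom x) then phi (f x)
  else limsup_Dom Dom (fun y => phi (f y)) x.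

Definition push_odm (Dom : X -> Prop) (f : X -> X) (mu : (X -> R) -> R)
  (phi : X -> R) : R :=
  Rinf (fun r => exists psi, contX psi /\
          (forall x, Ext Dom f phi x <= psi x) /\ r = mu psi).
End Metric.

(* On a space W whose points are those t : T with P t, with C^0(W) given by
   the predicate C; mu is only relevant on C.  *)
Definition pos_strong_submeasure {T : Type} (P : T -> Prop)
  (C : (T -> R) -> Prop) (mu : (T -> R) -> R) : Prop :=
  (forall phi psi, C phi -> C psi ->
     mu (fun t => phi t + psi t) <= mu phi + mu psi) /\
  (forall (lam : R) phi, 0 <= lam -> C phi ->
     mu (fun t => lam * phi t) = lam * mu phi) /\
  (exists K, forall phi c, C phi -> (forall t, P t -> Rabs (phi t) <= c) ->
     Rabs (mu phi) <= K * c) /\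
  (forall phi psi, C phi -> C psi -> (forall t, P t -> phi t <= psi t) ->
     mu phi <= mu psi).

Definition push {T U : Type} (g : T -> U) (mu : (T -> R) -> R)
  (phi : U -> R) : R := mu (fun t => phi (g t)).

Definition pi1 {X : Type} (z : nat -> X) : X := z 0%nat.
Definition shift {X : Type} (z : nat -> X) : nat -> X := fun n => z (S n).

(* Main.v *)
Require Import Defs.
From Stdlib Require Import Reals Lra Lia List Classical ClassicalEpsilon ClassicalDescription.
Open Scope R_scope.
From Stdlib Require Znat.
Local Open Scope R_scope.

Lemma Rsup_lub (S : R -> Prop) : (exists x, S x) -> (exists b, forall x, S x -> x <= b) ->
  is_lub S (Rsup S).
Proof.
  intros [x Hx] [b Hb]. unfold Rsup. apply epsilon_spec.
  destruct (completeness S) as [m Hm].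
  - exists b; intros y Hy; apply Hb; exact Hy.
  - exists x; exact Hx.
  - exists m; exact Hm.
Qed.

Lemma Rinf_ge (S : R -> Prop) (b : R) : (exists x, S x) -> (forall x, S x -> b <= x) ->
  b <= Rinf S.
Proof.
  intros [x Hx] Hb. unfold Rinf.
  assert (H : is_lub (fun r => S (- r)) (Rsup (fun r => S (- r)))).
  { apply Rsup_lub.
    - exists (- x). rewrite Ropp_involutive. exact Hx.
    - exists (- b). intros r Hr. specialize (Hb _ Hr). lra. }
  destruct H as [_ H2].
  assert (Rsup (fun r => S (- r)) <= - b).
  { apply H2. intros r Hr. specialize (Hb _ Hr). lra. }
  lra.
Qed.

Lemma Rinf_le (S : R -> Prop) (s : R) : (exists b, forall x, S x -> b <= x) -> S s ->
  Rinf S <= s.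
Proof.
  intros [b Hb] Hs. unfold Rinf.
  assert (H : is_lub (fun r => S (- r)) (Rsup (fun r => S (- r)))).
  { apply Rsup_lub.
    - exists (- s). rewrite Ropp_involutive. exact Hs.
    - exists (- b). intros r Hr. specialize (Hb _ Hr). lra. }
  destruct H as [H1 _].
  assert (- s <= Rsup (fun r => S (- r))).
  { apply H1. rewrite Ropp_involutive. exact Hs. }
  lra.
Qed.

Lemma Rabs_le_inv' (a b : R) : Rabs a <= b -> -b <= a /\ a <= b.
Proof. intros H. unfold Rabs in H. destruct (Rcase_abs a); split; lra. Qed.

Lemma le_eps (a b : R) : (forall eps, 0 < eps -> a <= b + eps) -> a <= b.
Proof.
  intros H. destruct (Rle_dec a b) as [h|h]; auto.
  specialize (H ((a - b)/2)). lra.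
Qed.

Lemma bounded_cont (X : Type) (d : X -> X -> R) (Hcompact : compact_metric d)
  (phi : X -> R) : contX d phi -> exists M, 0 <= M /\ forall x, Rabs (phi x) <= M.
Proof.
  intros Hc.
  destruct (Hcompact nat (fun n x => Rabs (phi x) < INR n)) as [l Hl].
  - intros n x Hx.
    destruct (Hc x (INR n - Rabs (phi x))) as [delta [Hd Hy]]; [lra|].
    exists delta; split; auto. intros y Hxy. specialize (Hy y Hxy).
    pose proof (Rabs_triang_inv (phi y) (phi x)). lra.
  - intros x. destruct (archimed (Rabs (phi x))) as [H1 _].
    exists (Z.to_nat (up (Rabs (phi x)))).
    rewrite INR_IZR_INZ, Znat.Z2Nat.id; auto.
    apply le_IZR. pose proof (Rabs_pos (phi x)). lra.
  - exists (fold_right (fun n acc => INR n + acc) 0 l). split.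
    + clear Hl. induction l; simpl; [lra|]. pose proof (pos_INR a). lra.
    + intros x. destruct (Hl x) as [i [Hi Hx]].
      assert (INR i <= fold_right (fun n acc => INR n + acc) 0 l).
      { clear Hl Hx. induction l as [|a l IH]; simpl in *; [contradiction|].
        assert (0 <= fold_right (fun n acc => INR n + acc) 0 l).
        { clear. induction l; simpl; [lra|]. pose proof (pos_INR a). lra. }
        destruct Hi as [<-|Hi]; [lra|]. specialize (IH Hi). pose proof (pos_INR a). lra. }
      lra.
Qed.

Lemma contGamma_coord (X : Type) (d : X -> X -> R) Dom f (phi : X -> R) (k : nat) :
  contX d phi -> contGamma d Dom f (fun z => phi (z k)).
Proof.
  intros Hc z _ eps He. destruct (Hc (z k) eps He) as [delta [Hd Hy]].
  exists k, delta. split; [exact Hd|]. intros w _ Hw. apply Hy. apply Hw. auto.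
Qed.

Theorem proposition3p1 (X : Type) (d : X -> X -> R)
  (Hmetric : is_metric d) (Hcompact : compact_metric d)
  (Dom : X -> Prop) (f : X -> X)
  (Hf : open_dense_map d Dom f) (Hgood : good_wrt_iterates d Dom f)
  (mu : ((nat -> X) -> R) -> R)
  (Hmu : pos_strong_submeasure (Gamma_inf d Dom f) (contGamma d Dom f) mu) :
  forall phi : X -> R, contX d phi ->
    push (@pi1 X) (push (@shift X) mu) phi
      <= push_odm d Dom f (push (@pi1 X) mu) phi.
Proof.
  intros phi Hphi. unfold push, push_odm, pi1, shift.
  destruct Hmu as [_ [_ [_ Hmono]]].
  destruct Hf as [_ [Hdense _]].
  destruct (bounded_cont X d Hcompact phi Hphi) as [M [HM0 HM]].
  apply Rinf_ge.
  -
    exists (mu (fun _ => M)). exists (fun _ => M). split; [|split; [|reflexivity]].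
    + intros x eps He. exists 1. split; [lra|]. intros. rewrite Rminus_diag, Rabs_R0. lra.
    + intros x. unfold Ext. destruct (excluded_middle_informative (Dom x)).
      * specialize (HM (f x)). apply Rabs_le_inv' in HM. lra.
      * unfold limsup_Dom.
        assert (Hsup : forall delta, 0 < delta ->
          is_lub (fun v => exists y, Dom y /\ d x y < delta /\ v = phi (f y))
            (Rsup (fun v => exists y, Dom y /\ d x y < delta /\ v = phi (f y)))
          /\ exists y, Dom y /\ d x y < delta).
        { intros delta Hd. destruct (Hdense x delta Hd) as [y [Hy1 Hy2]].
          split; [|eauto]. apply Rsup_lub.
          - exists (phi (f y)). eauto.
          - exists M. intros v [y' [_ [_ ->]]]. specialize (HM (f y')).
            apply Rabs_le_inv' in HM. lra. }
        destruct (Hsup 1 ltac:(lra)) as [[_ H2] _].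
        eapply Rle_trans; [apply Rinf_le|].
        -- exists (- M). intros s [delta [Hd ->]].
           destruct (Hsup delta Hd) as [[H1 _] [y [Hy1 Hy2]]].
           specialize (H1 (phi (f y)) (ex_intro _ y (conj Hy1 (conj Hy2 eq_refl)))).
           specialize (HM (f y)). apply Rabs_le_inv' in HM. lra.
        -- exists 1. split; [lra|]. reflexivity.
        -- apply H2. intros v [y' [_ [_ ->]]]. specialize (HM (f y')).
           apply Rabs_le_inv' in HM. lra.
  - intros r [psi [Hpsi [Hge ->]]].
    apply Hmono.
    + apply (contGamma_coord X d Dom f phi 1 Hphi).
    + apply (contGamma_coord X d Dom f psi 0 Hpsi).
    + intros z Hz. apply le_eps. intros eps He.
      destruct (Hpsi (z 0%nat) (eps/2)) as [d1 [Hd1 H1]]; [lra|].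
      destruct (Hphi (z 1%nat) (eps/2)) as [d2 [Hd2 H2]]; [lra|].
      destruct (Hz 1%nat (Rmin d1 d2)) as [x [[Hx _] Hxz]].
      { apply Rmin_pos; auto. }
      assert (A0 := Hxz 0%nat ltac:(lia)). assert (A1 := Hxz 1%nat ltac:(lia)).
      simpl in A0, A1.
      specialize (H1 x ltac:(pose proof (Rmin_l d1 d2); lra)).
      specialize (H2 (f x) ltac:(pose proof (Rmin_r d1 d2); lra)).
      specialize (Hge x). unfold Ext in Hge.
      destruct (excluded_middle_informative (Dom x)); [|contradiction].
      apply Rabs_def2 in H1. apply Rabs_def2 in H2. lra.
Qed.
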